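(* Let $\mathcal{S}$ be a reduced linear subspace of $\mathrm{Mat}_{m,n}(\mathbb{K})$ with the column property and $m\geq 2$. Set $r:=\mathrm{urk}(\mathcal{S})$ and assume $\#\mathbb{K}>r$ and that there is a vector $x\in\mathbb{K}^n$ with $\dim\{Mx\mid M\in\mathcal{S}\}=1$. Then there are an integer $q\in\{r,\dots,n-1\}$ and a space $\mathcal{S}'\sim\mathcal{S}$ such that every $M\in\mathcal{S}'$ has the form $M=\begin{bmatrix} ?_{1\times q} & ?_{1\times(n-q)}\\ H(M) & 0_{(m-1)\times(n-q)}\end{bmatrix}$, where $H(\mathcal{S}')$ is a reduced subspace of $\mathrm{Mat}_{m-1,q}(\mathbb{K})$ with the column property and upper-rank $r-1$. In particular, $\mathcal{S}$ is not primitive.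
   Context: $\mathrm{urk}$ (upper-rank) is the maximal rank of a matrix in the space. Matrix spaces are equivalent ($\sim$) if $\mathcal{M}=P\mathcal{M}'Q$ with $P,Q$ invertible. A matrix space is reduced if no nonzero vector is annihilated by all its matrices and the sum of its column spaces is the whole target space. A subspace is defective if none of its matrices has rank equal to its number of columns. $\mathcal{S}$ is $(r,s)$-decomposed if every $M$ is of the form $\begin{bmatrix} ?_{r\times s}& C(M)\\ B(M)&0\end{bmatrix}$ with lower space $B(\mathcal{S})$; the column property means every $(r,s)$-decomposed space equivalent to $\mathcal{S}$ ($0\le r\le m$, $1\le s\le n$) has defective lower space. For an operator space $\mathcal{T}\subseteq\mathcal{L}(U,V)$ with defectiveness index $c$ (greatest $c$ with $\dim\ker f\ge c$ for all $f$), $\mathcal{T}$ is primitive if it is reduced, there is no hyperplane $U'$ of $U$ with $\{f_{|U'}\}$ $c$-defective, and there is no surjection $\pi:V\to V'$ with $\dim V'=\dim V-1$ such that $\{\pi\circ f\}$ is $(c+1)$-defective; a matrix space is primitive if the corresponding operator space is. *)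

(* Defs.v *)
From HB Require Import structures.
From mathcomp Require Import all_boot all_order all_algebra.
Unset Printing Implicit Defensive.
Import Order.TTheory GRing.Theory Num.Theory.
Local Open Scope ring_scope.


(* A (Prop-valued) set of m x n matrices; a "matrix space" is given as such a
   predicate (in the theorem, the membership predicate of a {vspace}). *)
Notation mxset K m n := ('M[K]_(m, n) -> Prop).

(* entry (i,j) of M, given as naturals (0 outside the range) *)
Definition mxe {K : fieldType} {m n : nat} (M : 'M[K]_(m, n)) (i j : nat) : K :=
  match (insub i : option 'I_m), (insub j : option 'I_n) with
  | Some i', Some j' => M i' j'
  | _, _ => 0
  end.

Definition lowblock {K : fieldType} {m n : nat} (r s : nat) (M : 'M[K]_(m, n)) : 'M[K]_(m - r, s) :=
  \matrix_(i < m - r, j < s) mxe M (r + i) j.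

Definition urk {K : fieldType} {m n : nat} (S : mxset K m n) (r : nat) : Prop :=
  (exists M, S M /\ \rank M = r) /\ (forall M, S M -> (\rank M <= r)%N).

Definition mxequiv {K : fieldType} {m n : nat} (S T : mxset K m n) : Prop :=
  exists (P : 'M[K]_m) (Q : 'M[K]_n), P \in unitmx /\ Q \in unitmx /\
    forall M, S M <-> exists M', T M' /\ M = P *m M' *m Q.

Definition reduced {K : fieldType} {m n : nat} (S : mxset K m n) : Prop :=
  (forall x : 'cV[K]_n, (forall M, S M -> M *m x = 0) -> x = 0) /\
  (forall v : 'cV[K]_m, exists (k : nat) (Ms : 'I_k -> 'M[K]_(m, n))
      (xs : 'I_k -> 'cV[K]_n),
      (forall i, S (Ms i)) /\ v = \sum_(i < k) Ms i *m xs i).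

Definition defective {K : fieldType} {m n : nat} (S : mxset K m n) : Prop :=
  forall M, S M -> (\rank M < n)%N.

Definition decomposed {K : fieldType} {m n : nat} (r s : nat) (S : mxset K m n) : Prop :=
  forall M, S M -> forall (i : 'I_m) (j : 'I_n), (r <= i)%N -> (s <= j)%N -> M i j = 0.

Definition lowspace {K : fieldType} {m n : nat} (r s : nat) (S : mxset K m n) : mxset K (m - r) s :=
  fun N => exists M, S M /\ N = lowblock r s M.

Definition column_property {K : fieldType} {m n : nat} (S : mxset K m n) : Prop :=
  forall (r s : nat), (r <= m)%N -> (1 <= s <= n)%N ->
  forall S' : mxset K m n, mxequiv S' S -> decomposed r s S' ->
  defective (lowspace r s S').

Definition dker {K : fieldType} {m n : nat} (U : {vspace 'cV[K]_n}) (M : 'M[K]_(m, n)) : nat :=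
  \dim (U :&: lker (linfun (mulmx M)))%VS.

Definition cdefective_on {K : fieldType} {m n : nat} (c : nat) (U : {vspace 'cV[K]_n}) (S : mxset K m n) :=
  forall M, S M -> (c <= dker U M)%N.

Definition defidx {K : fieldType} {m n : nat} (S : mxset K m n) (c : nat) : Prop :=
  cdefective_on c fullv S /\
  forall c', cdefective_on c' fullv S -> (c' <= c)%N.

Definition primitive {K : fieldType} {m n : nat} (S : mxset K m n) : Prop :=
  reduced S /\
  forall c, defidx S c ->
    (~ exists U : {vspace 'cV[K]_n},
         (0 < n)%N /\ \dim U = n.-1 /\ cdefective_on c U S) /\
    (~ exists pi : 'M[K]_(m.-1, m),
         limg (linfun (mulmx pi : 'cV[K]_m -> 'cV[K]_(m.-1))) = fullv /\
         forall M, S M -> (c.+1 <= dker fullv (pi *m M))%N).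

(* Main.v *)
Require Import Defs.
From HB Require Import structures.
From mathcomp Require Import all_boot all_order all_algebra.
From mathcomp Require Import zify.
Unset Printing Implicit Defensive.
Import Order.TTheory GRing.Theory Num.Theory.
Local Open Scope ring_scope.
Lemma mxe_ord {K : fieldType} m n (M : 'M[K]_(m, n)) (i : 'I_m) (j : 'I_n) :
  mxe M i j = M i j.
Proof. by rewrite /mxe (valK i) (valK j). Qed.

Lemma mxe_outl {K : fieldType} m n (M : 'M[K]_(m, n)) (i j : nat) :
  (m <= i)%N -> mxe M i j = 0.
Proof. by move=> h; rewrite /mxe insubF // ltnNge h. Qed.

Lemma mxe_outr {K : fieldType} m n (M : 'M[K]_(m, n)) (i j : nat) :
  (n <= j)%N -> mxe M i j = 0.
Proof. by move=> h; rewrite /mxe; case: insub => // ?; rewrite insubF // ltnNge h. Qed.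

Lemma mxe_eq {K : fieldType} m n (A B : 'M[K]_(m, n)) :
  (forall i j : nat, mxe A i j = mxe B i j) -> A = B.
Proof. by move=> h; apply/matrixP => i j; rewrite -!mxe_ord h. Qed.

Lemma mxe_rank {K : fieldType} a c b (A : 'M[K]_(a, b)) (B : 'M[K]_(c, b)) :
  a = c -> (forall i j : nat, mxe A i j = mxe B i j) -> \rank A = \rank B.
Proof. by move=> e; case: c / e B => B h; rewrite (@mxe_eq _ _ _ _ _ h). Qed.

Lemma mxe_low {K : fieldType} m n r s (M : 'M[K]_(m, n)) (i j : nat) :
  mxe (lowblock r s M) i j = if ((i < m - r) && (j < s))%N then mxe M (r + i) j else 0.
Proof.
case: (ltnP i (m - r)) => hi /=; last by rewrite mxe_outl.
case: (ltnP j s) => hj; last by rewrite mxe_outr.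
by rewrite -[i]/(val (Ordinal hi)) -[j]/(val (Ordinal hj)) mxe_ord mxE.
Qed.

Lemma dim_limg_mulmx {K : fieldType} {a b} (A : 'M[K]_(a, b)) :
  \dim (limg (linfun (mulmx A : 'cV_b -> 'cV_a))) = \rank A.
Proof.
set X := col_base A; set Y := row_base A.
have hA : X *m Y = A by exact: mulmx_base.
have [Bl hBl] : exists Bl, Bl *m X = 1%:M by apply/row_fullP; exact: col_base_full.
have [Cr hCr] : exists Cr, Cr *m Y^T = 1%:M.
  by apply/row_fullP; rewrite /row_full mxrank_tr; exact: row_base_free.
have -> : limg (linfun (mulmx A : 'cV_b -> 'cV_a)) =
          limg (linfun (mulmx X : 'cV_(\rank A) -> 'cV_a)).
  apply/eqP; rewrite eqEsubv; apply/andP; split; apply/subvP => v /memv_imgP [u _ ->];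
    rewrite lfunE /=.
    have -> : A *m u = X *m (Y *m u) by rewrite mulmxA hA.
    by have := memv_img (linfun (mulmx X : 'cV_(\rank A) -> 'cV_a)) (memvf (Y *m u)); rewrite lfunE.
  have -> : X *m u = A *m (Cr^T *m u).
    transitivity (X *m Y *m (Cr^T *m u)); last by rewrite hA.
    by rewrite -mulmxA (mulmxA Y) -[Y]trmxK -trmx_mul hCr trmx1 mul1mx.
  by have := memv_img (linfun (mulmx A : 'cV_b -> 'cV_a)) (memvf (Cr^T *m u)); rewrite lfunE.
rewrite limg_dim_eq; first by rewrite dimvf dim_matrix mulr1.
apply/eqP; rewrite -subv0; apply/subvP => u; rewrite memv_cap memv_ker lfunE /= memv0.
by case/andP => _ /eqP h; rewrite -[u]mul1mx -hBl -mulmxA h mulmx0.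
Qed.

Lemma dker_full {K : fieldType} {a b} (A : 'M[K]_(a, b)) :
  dker fullv A = (b - \rank A)%N.
Proof.
have h := limg_ker_dim (linfun (mulmx A : 'cV_b -> 'cV_a)) fullv.
rewrite dimvf dim_matrix mulr1 in h.
rewrite /dker -(dim_limg_mulmx A).
move: h; set d1 := \dim (_ :&: _); set d2 := \dim _ => h.
by rewrite -h addnK.
Qed.

Lemma mxe0 {K : fieldType} m n (i j : nat) : mxe (0 : 'M[K]_(m, n)) i j = 0.
Proof. by rewrite /mxe; case: insub => // ?; case: insub => // ?; rewrite mxE. Qed.
Definition dn {K : fieldType} {m' n : nat} (N : 'M[K]_(m'.+2, n)) : 'M[K]_(m'.+1, n) :=
  dsubmx (N : 'M_(1 + m'.+1, n)).

Lemma dn_sub {K : fieldType} {m' n} (N : 'M[K]_(m'.+2, n)) : (dn N <= N)%MS.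
Proof.
by rewrite /dn -[X in dsubmx X]mul1mx -mul_dsub_mx submxMl.
Qed.

Lemma up_sub {K : fieldType} {m' n} (N : 'M[K]_(m'.+2, n)) :
  (usubmx (N : 'M_(1 + m'.+1, n)) <= N)%MS.
Proof.
by rewrite -[X in usubmx X]mul1mx -mul_usub_mx submxMl.
Qed.

Lemma rank_dn_ge {K : fieldType} {m' n} (N : 'M[K]_(m'.+2, n)) : (\rank (dn N) <= \rank N)%N.
Proof. exact: mxrankS (dn_sub N). Qed.

Lemma rank_dn_le {K : fieldType} {m' n} (N : 'M[K]_(m'.+2, n)) : (\rank N <= (\rank (dn N)).+1)%N.
Proof.
have h := (mxrank_adds_leqif (usubmx (N : 'M_(1 + m'.+1, n))) (dsubmx (N : 'M_(1 + m'.+1, n)))).1.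
rewrite addsmxE vsubmxK in h.
apply: leq_trans h _.
exact: leq_trans (leq_add (rank_leq_row _) (leqnn _)) _.
Qed.

Lemma dnE {K : fieldType} {m' n} (N : 'M[K]_(m'.+2, n)) (i : 'I_m'.+1) (j : 'I_n) :
  dn N i j = N (rshift 1 i) j.
Proof. by rewrite /dn mxE. Qed.

Lemma dnD {K : fieldType} {m' n} (a : K) (N M : 'M[K]_(m'.+2, n)) :
  dn (a *: N + M) = a *: dn N + dn M.
Proof. by apply/matrixP => i j; rewrite !mxE. Qed.

Lemma dn_mul {K : fieldType} {m' n p} (N : 'M[K]_(m'.+2, n)) (B : 'M[K]_(n, p)) :
  dn (N *m B) = dn N *m B.
Proof. by rewrite /dn mul_dsub_mx. Qed.

Lemma claimC {K : fieldType} {m' n} r (N : 'M[K]_(m'.+2, n)) (x : 'cV[K]_n) :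
  (\rank N <= r)%N -> (r <= \rank (dn N))%N -> dn (N *m x) = 0 -> N *m x = 0.
Proof.
move=> h1 h2 h3.
have e : \rank (dn N) = \rank N.
  by apply/eqP; rewrite eqn_leq rank_dn_ge (leq_trans h1 h2).
have hN : (N <= dn N)%MS by rewrite -(mxrank_leqif_sup (dn_sub N)).2 e.
have /submxP [w hw] : (usubmx (N : 'M_(1 + m'.+1, n)) <= dn N)%MS.
  exact: submx_trans (up_sub N) hN.
have -> : N *m x = col_mx (usubmx (N : 'M_(1 + m'.+1, n)) *m x) (dsubmx (N : 'M_(1 + m'.+1, n)) *m x).
  by rewrite -mul_col_mx vsubmxK.
have h4 : dsubmx (N : 'M_(1 + m'.+1, n)) *m x = 0 by rewrite -/(dn N) -dn_mul h3.
by rewrite h4 hw -mulmxA -/(dn N) -dn_mul h3 mulmx0 col_mx0.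
Qed.

Lemma strict_low {K : fieldType} m' n r (S1 : {vspace 'M[K]_(m'.+2, n)}) (x : 'cV[K]_n) :
  (exists f : 'I_r.+1 -> K, injective f) ->
  (forall M, M \in S1 -> (\rank M <= r)%N) ->
  (forall M, M \in S1 -> dn (M *m x) = 0) ->
  (exists2 M1, M1 \in S1 & M1 *m x != 0) ->
  forall M, M \in S1 -> (\rank (dn M) < r)%N.
Proof.
move=> [f finj] hr hx [M1 M1S M1x] M MS.
rewrite ltnNge; apply/negP => hge.
have rD : \rank (dn M) = r.
  by apply/eqP; rewrite eqn_leq hge (leq_trans (rank_dn_ge M) (hr M MS)).
have rm : (r <= m'.+1)%N by rewrite -rD rank_leq_row.
have rn : (r <= n)%N by rewrite -rD rank_leq_col.
set D0 := dn M.
have hG := mulmx_ebase D0; rewrite rD in hG.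
set C := col_ebase D0 in hG; set R := row_ebase D0 in hG.
have Cu : C \in unitmx by exact: col_ebase_unit.
have Ru : R \in unitmx by exact: row_ebase_unit.
pose L : 'M[K]_(r, m'.+1) := pid_mx r *m invmx C.
pose Rr : 'M[K]_(n, r) := invmx R *m pid_mx r.
have hL : L *m D0 *m Rr = 1%:M.
  rewrite /L /Rr -hG !mulmxA (mulmxKV Cu) -!mulmxA (mulKVmx Ru).
  by rewrite !mulmxA !pid_mx_id // pid_mx_1.
pose A := - (L *m dn M1 *m Rr).
have [a ha] : exists a, ~~ root (char_poly A) a.
  have : ~~ all (root (char_poly A)) (map f (enum 'I_r.+1)).
    apply/negP => hall.
    have := max_poly_roots (monic_neq0 (char_poly_monic A)) hall.
    rewrite map_inj_uniq // enum_uniq size_map size_enum_ord size_char_poly ltnn.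
    by move=> /(_ isT).
  by case/allPn => a _ ha; exists a.
have hu : (a%:M - A) \in unitmx.
  rewrite unitmxE unitfE; apply/negP => /det0P [v v0 hv].
  move: ha; rewrite -eigenvalue_root_char => /negP; apply; apply/eigenvalueP.
  exists v => //; move/eqP: hv; rewrite mulmxBr subr_eq0 => /eqP <-.
  by rewrite -scalemx1 -scalemxAr mulmx1.
pose N := a *: M + M1.
have NS : N \in S1 by rewrite memvD // memvZ.
have hN : L *m dn N *m Rr = a%:M - A.
  by rewrite /N dnD mulmxDr mulmxDl -scalemxAr -scalemxAl hL scalemx1 /A opprK.
have rN : (r <= \rank (dn N))%N.
  rewrite -[r](mxrank_unit hu) -hN.
  exact: leq_trans (mxrankM_maxl _ _) (mxrankM_maxr _ _).
have h1 := claimC _ _ _ (hr N NS) rN (hx N NS).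
have h2 := claimC _ _ _ (hr M MS) hge (hx M MS).
move: h1; rewrite /N mulmxDl -scalemxAl h2 scaler0 add0r => h1.
by rewrite h1 eqxx in M1x.
Qed.
Lemma low_dl {K : fieldType} {m' q n''} (N : 'M[K]_(m'.+2, q + n'')) :
  lowblock 1 q N = dlsubmx (N : 'M_(1 + m'.+1, q + n'')).
Proof.
apply/matrixP => i j; rewrite !mxE.
rewrite -[(1 + i)%N]/(val (rshift 1 i : 'I_(1 + m'.+1))).
rewrite -[nat_of_ord j]/(val (lshift n'' j)).
by rewrite mxe_ord.
Qed.

Lemma dec_dr {K : fieldType} {m' q n''} (S' : mxset K m'.+2 (q + n'')) N :
  decomposed 1 q S' -> S' N -> drsubmx (N : 'M_(1 + m'.+1, q + n'')) = 0.
Proof.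
move=> hd hN; apply/matrixP => i j; rewrite !mxE; apply: hd => //=; exact: leq_addr.
Qed.

Lemma dn_row {K : fieldType} {m' q n''} (N : 'M[K]_(m'.+2, q + n'')) :
  dn N = row_mx (dlsubmx (N : 'M_(1 + m'.+1, q + n''))) (drsubmx (N : 'M_(1 + m'.+1, q + n''))).
Proof. by rewrite /dn hsubmxK. Qed.

Lemma rank_low {K : fieldType} {m' q n''} (S' : mxset K m'.+2 (q + n'')) N :
  decomposed 1 q S' -> S' N -> \rank (lowblock 1 q N) = \rank (dn N).
Proof. by move=> hd hN; rewrite low_dl dn_row (dec_dr _ _ hd hN) rank_row_mx0. Qed.
Lemma mxe_block_dl {K : fieldType} {m1 m2 n1 n2} (a : 'M[K]_(m1, n1)) (b : 'M[K]_(m1, n2))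
  (c : 'M[K]_(m2, n1)) (d : 'M[K]_(m2, n2)) (k j : nat) :
  (j < n1)%N -> mxe (block_mx a b c d) (m1 + k) j = mxe c k j.
Proof.
move=> hj; case: (ltnP k m2) => hk; last first.
  by rewrite !mxe_outl // leq_add2l.
rewrite -[(m1 + k)%N]/(val (rshift m1 (Ordinal hk))) -[j]/(val (lshift n2 (Ordinal hj))).
by rewrite mxe_ord block_mxEdl -mxe_ord.
Qed.

Lemma mxe_block_dr {K : fieldType} {m1 m2 n1 n2} (a : 'M[K]_(m1, n1)) (b : 'M[K]_(m1, n2))
  (c : 'M[K]_(m2, n1)) (d : 'M[K]_(m2, n2)) (k j : nat) :
  mxe (block_mx a b c d) (m1 + k) (n1 + j) = mxe d k j.
Proof.
case: (ltnP k m2) => hk; last by rewrite !mxe_outl // leq_add2l.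
case: (ltnP j n2) => hj; last by rewrite !mxe_outr // leq_add2l.
rewrite -[(m1 + k)%N]/(val (rshift m1 (Ordinal hk))) -[(n1 + j)%N]/(val (rshift n1 (Ordinal hj))).
by rewrite mxe_ord block_mxEdr -mxe_ord.
Qed.

Lemma block_entry {K : fieldType} {m1 m2 n1 n2} (P' : 'M[K]_m2) (Q' : 'M[K]_n1)
  (N : 'M[K]_(m1 + m2, n1 + n2)) : drsubmx N = 0 ->
  block_mx (1%:M : 'M_m1) 0 0 P' *m N *m block_mx Q' 0 0 (1%:M : 'M_n2) =
  block_mx (ulsubmx N *m Q') (ursubmx N) (P' *m dlsubmx N *m Q') 0.
Proof.
move=> hd; rewrite -[N in LHS]submxK hd !mulmx_block.
by rewrite !mul1mx !mul0mx !mulmx0 !addr0 !add0r !mulmx1.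
Qed.
Lemma colprop_low {K : fieldType} m' q n'' (S' : mxset K m'.+2 (q + n'')) :
  column_property S' -> decomposed 1 q S' -> column_property (lowspace 1 q S').
Proof.
move=> hcol hd r' s hr' hs T [P' [Q' [P'u [Q'u hT]]]] hdT N0 [T0 [T0T ->]].
have [H0 [[N [NS ->]] eT0]] := (hT T0).1 T0T.
pose P1 : 'M[K]_(m'.+2) := block_mx (1%:M : 'M_1) 0 0 P'.
pose Q1 : 'M[K]_(q + n'') := block_mx Q' 0 0 (1%:M : 'M_n'').
have P1u : P1 \in unitmx.
  have e : \det P1 = \det P'.
    by have := det_ublock (1%:M : 'M[K]_1) 0 P'; rewrite det1 mul1r => h; exact: h.
  by rewrite unitmxE e -unitmxE.
have Q1u : Q1 \in unitmx by rewrite unitmxE /Q1 det_ublock det1 mulr1 -unitmxE.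
pose S'' := fun M : 'M[K]_(m'.+2, q + n'') => exists N', S' N' /\ M = P1 *m N' *m Q1.
have eqv : mxequiv S'' S' by exists P1, Q1.
have key : forall N', S' N' -> P1 *m N' *m Q1 =
   (block_mx (ulsubmx (N' : 'M_(1 + m'.+1, q + n'')) *m Q') (ursubmx (N' : 'M_(1 + m'.+1, q + n'')))
      (P' *m lowblock 1 q N' *m Q') 0 : 'M_(m'.+2, q + n'')).
  move=> N' hN'; rewrite low_dl.
  exact: (block_entry P' Q' (N' : 'M_(1 + m'.+1, q + n'')) (dec_dr _ _ hd hN')).
have hdec : decomposed (1 + r') s S''.
  move=> M [N' [hN' ->]] i j hi hj.
  rewrite -mxe_ord (key N' hN').
  have hi' : nat_of_ord i = (1 + i.-1)%N by lia.
  rewrite hi'; case: (ltnP j q) => hjq.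
    rewrite (mxe_block_dl (m1:=1) (m2:=m'.+2 - 1) (n1:=q) (n2:=n'') _ _ _ _ _ _ hjq).
    have hi1 : (i.-1 < m'.+2 - 1)%N by have := ltn_ord i; lia.
    rewrite -[i.-1]/(val (Ordinal hi1)) -[nat_of_ord j]/(val (Ordinal hjq)) mxe_ord.
    apply: (hdT _ ((hT _).2 _)) => /=; last by lia.
      by exists (lowblock 1 q N'); split => //; exists N'.
    by case/andP: hs => _ hsq; lia.
  have hj' : nat_of_ord j = (q + (j - q))%N by lia.
  by rewrite hj' (mxe_block_dr (m1:=1) (m2:=m'.+2 - 1) (n1:=q) (n2:=n'')) mxe0.
have hs' : (1 <= s <= q + n'')%N by case/andP: hs => h1 h2; apply/andP; split => //; lia.
have hdef := hcol (1 + r')%N s ltac:(lia) hs' S'' eqv hdec.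
have hM : lowspace (1 + r') s S'' (lowblock (1 + r') s (P1 *m N *m Q1)).
  by exists (P1 *m N *m Q1); split => //; exists N.
have := hdef _ hM.
suff -> : \rank (lowblock r' s T0) = \rank (lowblock (1 + r') s (P1 *m N *m Q1)) by [].
apply: mxe_rank; first by lia.
move=> a b; rewrite !mxe_low.
have -> : (m'.+2 - 1 - r' = m'.+2 - (1 + r'))%N by lia.
case: ifP => // /andP [ha hb].
have hbq : (b < q)%N by case/andP: hs => _ hsq; lia.
rewrite (key N NS) -addnA (mxe_block_dl (m1:=1) (m2:=m'.+2 - 1) (n1:=q) (n2:=n'') _ _ _ _ _ _ hbq).
by rewrite eT0.
Qed.
Lemma dn_sum {K : fieldType} {m' n} k (F : 'I_k -> 'M[K]_(m'.+2, n)) :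
  dn (\sum_(i < k) F i) = \sum_(i < k) dn (F i).
Proof. by apply/matrixP => i j; rewrite !mxE !summxE; apply: eq_bigr => l _; rewrite mxE. Qed.

Lemma block_main' {K : fieldType} m' q n'' r (S' : mxset K m'.+2 (q + n'')) :
  column_property S' -> reduced S' -> decomposed 1 q S' ->
  (forall w : 'cV[K]_(q + n''), (forall N, S' N -> dn N *m w = 0) ->
     forall j : 'I_(q + n''), (j < q)%N -> w j 0 = 0) ->
  urk S' r ->
  (forall N, S' N -> (\rank (dn N) < r)%N) ->
  (r <= q)%N /\ reduced (lowspace 1 q S') /\ column_property (lowspace 1 q S') /\
  urk (lowspace 1 q S') r.-1.
Proof.
move=> hcol hred hd hker [[M0 [M0S rM0]] hur] hst.
have rH0 : \rank (lowblock 1 q M0) = r.-1.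
  rewrite (rank_low _ _ hd M0S); have := rank_dn_le M0; have := hst _ M0S; lia.
have hurk : urk (lowspace 1 q S') r.-1.
  split; first by exists (lowblock 1 q M0); split => //; exists M0.
  move=> H [N [NS ->]]; rewrite (rank_low _ _ hd NS); have := hst _ NS; lia.
have hred' : reduced (lowspace 1 q S').
  split.
    move=> z hz.
    have hw := hker (col_mx z 0).
    have hw' : forall N, S' N -> dn N *m col_mx z 0 = 0.
      move=> N hN; rewrite dn_row (dec_dr _ _ hd hN) mul_row_col mulmx0 addr0 -low_dl.
      by apply: hz; exists N.
    apply/matrixP => j l; rewrite (ord1 l) mxE.
    have := hw hw' (lshift n'' j) (ltn_ord j).
    by rewrite col_mxEu.
  move=> v.
  have [k [Ms [xs [hMs hv]]]] := hred.2 (col_mx (0 : 'cV[K]_1) v : 'cV_(m'.+2)).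
  exists k, (fun i => lowblock 1 q (Ms i)), (fun i => usubmx (xs i : 'cV_(q + n''))).
  split; first by move=> i; exists (Ms i).
  have := congr1 (fun X : 'cV[K]_(m'.+2) => dn X) hv.
  rewrite {1}/dn col_mxKd => ->.
  rewrite dn_sum; apply: eq_bigr => i _.
  rewrite dn_mul dn_row (dec_dr _ _ hd (hMs i)) -low_dl.
  rewrite -[X in _ *m X](vsubmxK (xs i : 'cV_(q + n''))) mul_row_col mul0mx addr0.
  by [].
have q0 : (0 < q)%N.
  rewrite lt0n; apply/negP => /eqP q0.
  have [k [Ms [xs [_ hv]]]] := hred'.2 (const_mx 1).
  have := congr1 (fun X : 'M[K]_(m'.+1, 1) => X ord0 ord0) hv; rewrite !mxE summxE.
  rewrite big1 ?oner_eq0 //; last first.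
    by move=> i _; rewrite mxE big1 // => -[l hl] _; exfalso; lia.
  by move/eqP; rewrite oner_eq0.
have h2 : (1 <= q <= q + n'')%N by rewrite q0 leq_addr.
have hdf := hcol 1 q isT h2 S'.
have hr : (r.-1 < q)%N.
  rewrite -rH0; apply: (hdf _ hd); last by exists M0.
  exists 1%:M, 1%:M; split; first exact: unitmx1.
  split; first exact: unitmx1.
  move=> M; split; first by move=> h; exists M; rewrite mul1mx mulmx1.
  by case=> M' [h ->]; rewrite mul1mx mulmx1.
have r0 : (0 < r)%N by have := hst _ M0S; lia.
split; first lia.
by do 2!split => //; exact: colprop_low.
Qed.
Lemma block_main {K : fieldType} m' n q r (S' : mxset K m'.+2 n) :
  (q <= n)%N -> column_property S' -> reduced S' -> decomposed 1 q S' ->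
  (forall w : 'cV[K]_n, (forall N, S' N -> dn N *m w = 0) ->
     forall j : 'I_n, (j < q)%N -> w j 0 = 0) ->
  urk S' r ->
  (forall N, S' N -> (\rank (dn N) < r)%N) ->
  (r <= q)%N /\ reduced (lowspace 1 q S') /\ column_property (lowspace 1 q S') /\
  urk (lowspace 1 q S') r.-1.
Proof.
move=> hq; move: S'; rewrite -(subnKC hq); move: (n - q)%N => n''.
exact: block_main'.
Qed.

Lemma rank_PMQ {K : fieldType} {m n} (P : 'M[K]_m) (Q : 'M[K]_n) (M : 'M[K]_(m, n)) :
  P \in unitmx -> Q \in unitmx -> \rank (P *m M *m Q) = \rank M.
Proof.
move=> Pu Qu; rewrite mxrankMfree ?row_free_unit //.
by rewrite -mxrank_tr trmx_mul mxrankMfree ?mxrank_tr // row_free_unit unitmx_tr.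
Qed.

Lemma mxequiv_trans {K : fieldType} {m n} (T U V : mxset K m n) :
  mxequiv T U -> mxequiv U V -> mxequiv T V.
Proof.
move=> [P1 [Q1 [P1u [Q1u h1]]]] [P2 [Q2 [P2u [Q2u h2]]]].
exists (P1 *m P2), (Q2 *m Q1); split; first by rewrite unitmx_mul P1u.
split; first by rewrite unitmx_mul Q1u Q2u.
move=> M; split.
  case/h1 => M' [/h2 [M'' [hM'' ->]] ->]; exists M''; split => //.
  by rewrite !mulmxA.
case=> M'' [hM'' ->]; apply/h1; exists (P2 *m M'' *m Q2); split.
  by apply/h2; exists M''.
by rewrite !mulmxA.
Qed.

Lemma colprop_equiv {K : fieldType} {m n} (S' S : mxset K m n) :
  mxequiv S' S -> column_property S -> column_property S'.
Proof.
move=> e hc r s hr hs T eT hd; apply: (hc r s hr hs T _ hd).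
exact: mxequiv_trans eT e.
Qed.

Lemma reduced_equiv {K : fieldType} {m n} (S' S : mxset K m n) :
  mxequiv S' S -> reduced S -> reduced S'.
Proof.
move=> [P [Q [Pu [Qu h]]]] [hk hs]; split.
  move=> w hw.
  have : Q *m w = 0.
    apply: hk => M hM.
    have := hw (P *m M *m Q) ((h _).2 (ex_intro _ M (conj hM erefl))).
    by rewrite -!mulmxA => /(congr1 (mulmx (invmx P))); rewrite mulKmx // mulmx0 mulmxA.
  by move/(congr1 (mulmx (invmx Q))); rewrite mulKmx // mulmx0.
move=> v; have [k [Ms [xs [hMs hv]]]] := hs (invmx P *m v).
exists k, (fun i => P *m Ms i *m Q), (fun i => invmx Q *m xs i); split.
  by move=> i; apply/h; exists (Ms i).
rewrite -[v](mulKVmx Pu) hv mulmx_sumr; apply: eq_bigr => i _.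
by rewrite -!mulmxA (mulmxA Q) mulmxV // mul1mx.
Qed.

Lemma urk_equiv {K : fieldType} {m n} (S' S : mxset K m n) r :
  mxequiv S' S -> urk S r -> urk S' r.
Proof.
move=> [P [Q [Pu [Qu h]]]] [[M0 [hM0 rM0]] hr]; split.
  by exists (P *m M0 *m Q); split; [apply/h; exists M0 | rewrite rank_PMQ].
by move=> M /h [M' [hM' ->]]; rewrite rank_PMQ // hr.
Qed.
Lemma pid_mul_entry {K : fieldType} {n} q (w : 'cV[K]_n) (j : 'I_n) :
  (pid_mx q *m w) j 0 = if (j < q)%N then w j 0 else 0.
Proof.
rewrite mxE (bigD1 j) //= big1 ?addr0 => [|k hk]; last first.
  by rewrite mxE; case: eqP => [/val_inj e|_]; [rewrite e eqxx in hk | rewrite mul0r].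
by rewrite mxE eqxx /=; case: (j < q)%N; rewrite ?mul1r ?mul0r.
Qed.

Lemma mul_pid_entry {K : fieldType} {a n} q (X : 'M[K]_(a, n)) i (j : 'I_n) :
  (q <= j)%N -> (X *m pid_mx q) i j = 0.
Proof.
move=> hj; rewrite mxE big1 // => k _; rewrite mxE.
case: eqP => [e|_]; last by rewrite mulr0.
by rewrite e ltnNge hj /= mulr0.
Qed.

Lemma dnZ {K : fieldType} {m' n} (a : K) (N : 'M[K]_(m'.+2, n)) : dn (a *: N) = a *: dn N.
Proof. by apply/matrixP => i j; rewrite !mxE. Qed.

Lemma dn_pid {K : fieldType} {m'} (R : 'M[K]_1) : dn (pid_mx 1 *m R : 'M_(m'.+2, 1)) = 0.
Proof. by apply/matrixP => i j; rewrite dn_mul (ord1 j) !mxE big1 // => k _; rewrite !mxE /= andbF mul0r. Qed.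
Theorem mainTheorem14 (K : fieldType) (m n : nat)
    (S : {vspace 'M[K]_(m, n)}) (r : nat) :
  reduced (fun M => M \in S) ->
  column_property (fun M => M \in S) ->
  (2 <= m)%N ->
  urk (fun M => M \in S) r ->
  (exists f : 'I_r.+1 -> K, injective f) ->
  (exists x : 'cV[K]_n, \dim (linfun (mulmxr x) @: S)%VS = 1%N) ->
  (exists q : nat, (r <= q)%N /\ (q < n)%N /\
     exists S' : {vspace 'M[K]_(m, n)},
       mxequiv (fun M => M \in S') (fun M => M \in S) /\
       decomposed 1 q (fun M => M \in S') /\
       reduced (lowspace 1 q (fun M => M \in S')) /\
       column_property (lowspace 1 q (fun M => M \in S')) /\
       urk (lowspace 1 q (fun M => M \in S')) r.-1)
  /\ ~ primitive (fun M => M \in S).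
Proof.
move=> hred hcol hm hurk hf [x hx].
case: m S hred hcol hm hurk hx => [|[|m']] S hred hcol hm hurk hx //.
set V := (linfun (mulmxr x) @: S)%VS in hx.
pose y := vpick V.
have y0 : y != 0 by rewrite vpick0 -dimv_eq0 hx.
have yV : y \in V := memv_pick V.
have Vy : V = <[y]>%VS.
  by apply/eqP; rewrite eq_sym eqEdim dim_vline y0 hx -memvE yV.
have hMx : forall M, M \in S -> exists k, M *m x = k *: y.
  move=> M MS; have := memv_img (linfun (mulmxr x)) MS.
  by rewrite lfunE /= -/V Vy => /vlineP.
have [M1 M1S eM1] : exists2 M1, M1 \in S & y = M1 *m x.
  by case/memv_imgP: yV => M1 M1S ->; exists M1; rewrite // lfunE.
pose P := invmx (col_ebase y).
have Pu : P \in unitmx by rewrite unitmx_inv col_ebase_unit.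
have ry : \rank y = 1%N.
  by apply/eqP; rewrite eqn_leq rank_leq_col lt0n mxrank_eq0.
have Py : dn (P *m y) = 0.
  have hy := mulmx_ebase y; rewrite ry in hy.
  by rewrite -[y in P *m y]hy /P !mulmxA mulVmx ?col_ebase_unit // mul1mx dn_pid.
have hPMx : forall M, M \in S -> dn (P *m M *m x) = 0.
  by move=> M MS; have [k e] := hMx M MS; rewrite -mulmxA e -scalemxAr dnZ Py scaler0.
pose B := (\sum_(i < \dim S) <<dn (P *m (vbasis S)`_i)>>)%MS.
have C1 : forall M, M \in S -> (dn (P *m M) <= B)%MS.
  move=> M MS; rewrite (coord_vbasis MS) mulmx_sumr dn_sum.
  apply: summx_sub => i _; rewrite -scalemxAr dnZ scalemx_sub //.
  by apply: (sumsmx_sup i) => //; rewrite genmxE.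
have C2 : forall w : 'cV[K]_n, (forall M, M \in S -> dn (P *m M) *m w = 0) -> B *m w = 0.
  move=> w hw; apply/sub_kermxP; apply/sumsmx_subP => i _; rewrite genmxE.
  apply/sub_kermxP; apply: hw; apply: vbasis_mem; apply: mem_nth.
  by rewrite size_tuple.
pose q := \rank B.
have hB := mulmx_ebase B; rewrite -/q in hB.
set Cb := col_ebase B in hB; set Rb := row_ebase B in hB.
have Cbu : Cb \in unitmx by exact: col_ebase_unit.
have Rbu : Rb \in unitmx by exact: row_ebase_unit.
pose Q := invmx Rb.
have Qu : Q \in unitmx by rewrite unitmx_inv.
pose S' := (linfun (mulmxr Q \o mulmx P) @: S)%VS.
have memS' : forall N, N \in S' <-> exists M, M \in S /\ N = P *m M *m Q.
  move=> N; split.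
    by case/memv_imgP => M MS ->; exists M; rewrite lfunE.
  by case=> M [MS ->]; have := memv_img (linfun (mulmxr Q \o mulmx P)) MS; rewrite lfunE.
have eqv : mxequiv (fun M => M \in S') (fun M => M \in S).
  by exists P, Q; do 2!split => //; move=> N; apply: memS'.
have hdec : decomposed 1 q (fun M => M \in S').
  move=> N /memS' [M [MS ->]] i j hi hj.
  have hi1 : (i.-1 < m'.+1)%N by have := ltn_ord i; lia.
  have -> : i = rshift 1 (Ordinal hi1) :> 'I_(m'.+2) by apply/val_inj => /=; lia.
  transitivity (dn (P *m M *m Q) (Ordinal hi1) j); first by rewrite dnE.
  have /submxP [Z hZ] := C1 M MS.
  rewrite dn_mul hZ -hB /Q !mulmxA mulmxK //.
  exact: mul_pid_entry.
have hker : forall w : 'cV[K]_n, (forall N, N \in S' -> dn N *m w = 0) ->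
    forall j : 'I_n, (j < q)%N -> w j 0 = 0.
  move=> w hw j hj.
  have h1 : B *m (Q *m w) = 0.
    apply: C2 => M MS; rewrite mulmxA -dn_mul; apply: hw; apply/memS'.
    by exists M.
  have h2 : (pid_mx q : 'M[K]_n) *m w = 0.
    move: h1; rewrite -hB /Q -!mulmxA mulKVmx // => /(congr1 (mulmx (invmx Cb))).
    by rewrite mulKmx // mulmx0.
  by have := pid_mul_entry q w j; rewrite h2 hj mxE.
pose x' := invmx Q *m x.
have hNx' : forall N, N \in S' -> dn (N *m x') = 0.
  by move=> N /memS' [M [MS ->]]; rewrite /x' mulmxA mulmxK // hPMx.
have x0 : x != 0.
  by apply/eqP => h; move: y0; rewrite eM1 h mulmx0 eqxx.
have x'0 : x' != 0.
  by apply/eqP => h; move: x0; rewrite -[x](mulKVmx Qu) -/x' h mulmx0 eqxx.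
have hq : (q < n)%N.
  rewrite ltnNge; apply/negP => hnq; move/negP: x'0; apply.
  apply/eqP/matrixP => j k; rewrite (ord1 k) [RHS]mxE.
  have hw : forall N, N \in S' -> dn N *m x' = 0 by move=> N NS; rewrite -dn_mul hNx'.
  have hjq : (j < q)%N by have := ltn_ord j; lia.
  exact: (hker x' hw j hjq).
have hurk' : urk (fun M => M \in S') r := urk_equiv _ _ _ eqv hurk.
have hst : forall N, N \in S' -> (\rank (dn N) < r)%N.
  apply: (strict_low m' n r S' x' hf) => //; first by move=> M MS; apply: hurk'.2.
  exists (P *m M1 *m Q); first by apply/memS'; exists M1.
  rewrite /x' mulmxA mulmxK // -mulmxA -eM1.
  by apply/eqP => h; move: y0; rewrite -[y](mulKmx Pu) h mulmx0 eqxx.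
have [hrq [hr1 [hr2 hr3]]] := block_main m' n q r _ (ltnW hq) (colprop_equiv _ _ eqv hcol)
  (reduced_equiv _ _ eqv hred) hdec hker hurk' hst.
split; first by exists q; do 2!split => //; exists S'.
move=> [_ hprim].
have r0 : (0 < r)%N by have := hst 0 (mem0v _); lia.
have rn : (r <= n)%N by lia.
have hdef : defidx (fun M => M \in S) (n - r).
  split.
    by move=> M MS; rewrite dker_full; have := hurk.2 M MS; lia.
  move=> c' hc'; have [M0 [M0S rM0]] := hurk.1.
  by have := hc' M0 M0S; rewrite dker_full rM0.
have [_ hno] := hprim _ hdef.
apply: hno; exists (dn P); split.
  apply/eqP; rewrite eqEdim subvf /= dimvf dim_matrix mulr1 dim_limg_mulmx.
  by have := rank_dn_le P; rewrite mxrank_unit //; lia.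
move=> M MS; rewrite dker_full.
have : (\rank (dn P *m M) < r)%N.
  rewrite -dn_mul -(mxrankMfree _ (_ : row_free Q)) ?row_free_unit // -dn_mul.
  by apply: hst; apply/memS'; exists M.
move=> h.
apply: leq_trans (_ : (n - r).+1 <= n - r.-1)%N _; first lia.
by apply: leq_sub2l; rewrite -ltnS prednK //; exact: h.
Qed.
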